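(* Let $m_1,m_2$ be positive integers and let $n$ be an even integer with $m_2 \geq n \geq \lceil \log m_1 \rceil+\lceil \log m_2 \rceil+1$. Then $BR(C_{n},K_{m_1,m_2})\leq 32m_1+49m_2$.
   Context: $C_n$ is the cycle on $n$ vertices and $K_{a,b}$ the complete bipartite graph with parts of sizes $a$ and $b$. For bipartite graphs $G_1,\ldots,G_k$, the bipartite Ramsey number $BR(G_1,\ldots,G_k)$ is the smallest integer $b$ such that for every coloring of the edges of $K_{b,b}$ with colors $1,\ldots,k$ there is, for some $i$, a copy of $G_i$ all of whose edges have color $i$. $\log$ denotes the logarithm to base $2$. *)

(* Defs.v *)
From mathcomp Require Import all_boot.
Set Implicit Arguments. Unset Strict Implicit. Unset Printing Implicit Defensive.

Definition KV (b : nat) := ('I_b + 'I_b)%type.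

(* A 2-colouring of the edges of K_{b,b}: edge {inl i, inr j} gets colour
   c i j; true = colour 1, false = colour 2. *)
Definition coloring (b : nat) := 'I_b -> 'I_b -> bool.

Definition adj_col (b : nat) (c : coloring b) (col : bool) (u v : KV b) : bool :=
  match u, v with
  | inl i, inr j => c i j == col
  | inr j, inl i => c i j == col
  | _, _ => false
  end.

Definition has_mono_cycle (n b : nat) (c : coloring b) (col : bool) : Prop :=
  exists f : 'I_n -> KV b,
    injective f /\ forall i : 'I_n, adj_col c col (f i) (f (ordS i)).

Definition has_mono_Kab (m1 m2 b : nat) (c : coloring b) (col : bool) : Prop :=
  exists (f : 'I_m1 -> KV b) (g : 'I_m2 -> KV b),
    [/\ injective f, injective g,
        (forall i j, f i != g j) &
        (forall i j, adj_col c col (f i) (g j))].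

Definition BR_holds (n m1 m2 b : nat) : Prop :=
  forall c : coloring b, has_mono_cycle n c true \/ has_mono_Kab m1 m2 c false.

(* BR(C_n, K_{m1,m2}) <= N : the least b with BR_holds is at most N,
   i.e. some b <= N satisfies BR_holds. *)
Definition BR_le (n m1 m2 N : nat) : Prop :=
  exists b, b <= N /\ BR_holds n m1 m2 b.

(* Main.v *)
Require Import Defs.
From mathcomp Require Import all_boot.
From mathcomp Require Import zify.
From Stdlib Require Import Classical.

Set Implicit Arguments. Unset Strict Implicit. Unset Printing Implicit Defensive.

Ltac abscard := repeat match goal with
  | H : context [ @card.body ?T ?A ] |- _ =>
      let z := fresh "z" in set z := @card.body T A in *; clearbody z
  | |- context [ @card.body ?T ?A ] =>
      let z := fresh "z" in set z := @card.body T A in *; clearbody z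
  end.

Section Gen.
Variable T : finType.

Lemma exists_subset_card (A : {set T}) k : k <= #|A| ->
  exists B : {set T}, B \subset A /\ #|B| = k.
Proof.
elim: k => [|k IH] hk.
  by exists set0; rewrite sub0set cards0.
have [B [sBA cB]] := IH (ltnW hk).
have : A :\: B != set0.
  rewrite -card_gt0; have := cardsID B A.
  have : #|A :&: B| <= #|B| by rewrite subset_leq_card // subsetIr.
  lia.
case/set0Pn => a; rewrite inE => /andP [aB aA].
exists (a |: B); split.
  by rewrite subUset sub1set aA sBA.
by rewrite cardsU1 aB cB.
Qed.

Lemma card_setU_le (A B : {set T}) : #|A :|: B| <= #|A| + #|B|.
Proof. by rewrite cardsU leq_subr. Qed.

End Gen.

Section Main.
Variable b : nat.
Variable c : coloring b.
Notation V := ('I_b + 'I_b)%type.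

Definition red (u v : V) := adj_col c true u v.
Lemma redC u v : red u v = red v u.
Proof. by case: u => ?; case: v => ?. Qed.

Definition isL (v : V) := if v is inl _ then true else false.
Lemma red_side u v : red u v -> isL u != isL v.
Proof. by case: u => ?; case: v => ?. Qed.

Definition Lset : {set V} := [set v | isL v].
Definition Rset : {set V} := ~: Lset.
Definition opp (X Y : {set V}) :=
  (X \subset Lset /\ Y \subset Rset) \/ (X \subset Rset /\ Y \subset Lset).
Definition NB (X : {set V}) : {set V} := [set v | [exists u in X, red u v]].

Lemma card_Lset : #|Lset| = b.
Proof.
have -> : Lset = [set inl i | i in [set: 'I_b]] :> {set V}.
  apply/setP => v; rewrite inE; case: v => i /=.
  - by apply/esym/imsetP; exists i; rewrite ?inE.
  - by apply/esym/imsetP => -[j _].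
by rewrite card_imset ?cardsT ?card_ord //; move=> i j [].
Qed.

Lemma card_Rset : #|Rset| = b.
Proof. have := cardsC Lset; rewrite card_Lset card_sum !card_ord /Rset. lia. Qed.

Lemma inR v : (v \in Rset) = ~~ isL v.
Proof. by rewrite /Rset !inE. Qed.
Lemma inL v : (v \in Lset) = isL v.
Proof. by rewrite !inE. Qed.

Lemma opp_neq X Y x y : opp X Y -> x \in X -> y \in Y -> isL x != isL y.
Proof.
case=> [[sX sY]|[sX sY]] xX yY.
  by move: (subsetP sX x xX) (subsetP sY y yY); rewrite inL inR => -> /negbTE ->.
by move: (subsetP sX x xX) (subsetP sY y yY); rewrite inL inR => /negbTE -> ->.
Qed.

Lemma adj_false u v : isL u != isL v -> adj_col c false u v = ~~ red u v.
Proof. by case: u => i; case: v => j //= _; rewrite /red /=; case: (c _ _). Qed.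

Lemma kab_of_noedge m1 m2 (X Y : {set V}) : opp X Y -> m1 <= #|X| -> m2 <= #|Y| ->
  (forall x y, x \in X -> y \in Y -> ~~ red x y) -> has_mono_Kab m1 m2 c false.
Proof.
move=> hop h1 h2 hno.
exists (fun i => enum_val (widen_ord h1 i)), (fun j => enum_val (widen_ord h2 j)).
split.
- by move=> i j /enum_val_inj e; apply/val_inj; exact: (congr1 val e).
- by move=> i j /enum_val_inj e; apply/val_inj; exact: (congr1 val e).
- move=> i j; apply/eqP => e.
  have := opp_neq hop (enum_valP (widen_ord h1 i)) (enum_valP (widen_ord h2 j)).
  by rewrite e eqxx.
- move=> i j; rewrite adj_false; first by apply: hno; apply: enum_valP.
  exact: opp_neq hop (enum_valP _) (enum_valP _).
Qed.

Lemma EP_of m1 m2 : ~ has_mono_Kab m1 m2 c false -> forall X Y, opp X Y ->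
  m1 <= #|X| -> m2 <= #|Y| -> exists x y, [/\ x \in X, y \in Y & red x y].
Proof.
move=> hK X Y hop h1 h2.
case: (boolP [exists x in X, exists y in Y, red x y]).
  case/existsP => x /andP [xX /existsP [y /andP [yY rxy]]]. by exists x, y.
move=> hn; exfalso; apply: hK; apply: (kab_of_noedge hop h1 h2) => x y xX yY.
apply/negP => rxy; move/negP: hn; apply; apply/existsP; exists x; rewrite xX /=.
by apply/existsP; exists y; rewrite yY.
Qed.

Lemma NB1 u v : (v \in NB [set u]) = red u v.
Proof.
rewrite inE; apply/existsP/idP => [[w /andP [] ]|]; first by rewrite inE => /eqP ->.
by move=> r; exists u; rewrite inE eqxx.
Qed.

Lemma NBP (X : {set V}) v : reflect (exists2 u, u \in X & red u v) (v \in NB X).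
Proof.
rewrite inE; apply: (iffP existsP) => [[u /andP [] ]|[u uX r]]; first by exists u.
by exists u; rewrite uX.
Qed.

Lemma NBS (X Y : {set V}) : X \subset Y -> NB X \subset NB Y.
Proof.
move=> sXY; apply/subsetP => v /NBP [u uX r]; apply/NBP; exists u => //.
exact: (subsetP sXY).
Qed.

Lemma NBU (X Y : {set V}) : NB (X :|: Y) = NB X :|: NB Y.
Proof.
apply/setP => v; rewrite in_setU; apply/NBP/orP => [[u]|[] /NBP [u uX r]].
- by rewrite inE => /orP [] uX r; [left|right]; apply/NBP; exists u.
- by exists u; rewrite // inE uX.
- by exists u; rewrite // inE uX orbT.
Qed.

Lemma NB0 : NB set0 = set0.
Proof. by apply/setP => v; rewrite in_set0; apply/NBP => -[u]; rewrite inE. Qed.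

Lemma card_NB_le (F X : {set V}) t :
  (forall v, v \in X -> #|NB [set v] :&: F| <= t) -> #|NB X :&: F| <= t * #|X|.
Proof.
move: {2}#|X| (leqnn #|X|) => k; elim: k X => [|k IH] X hk hv.
  have -> : X = set0 by apply: cards0_eq; lia.
  rewrite NB0.
  by rewrite set0I cards0.
case: (set_0Vmem X) => [->|[u uX]].
  rewrite NB0.
  by rewrite set0I cards0.
rewrite -{1}(setD1K uX) NBU setIUl.
have h1 := card_setU_le (NB [set u] :&: F) (NB (X :\ u) :&: F).
have h2 := hv u uX.
have h3 : #|NB (X :\ u) :&: F| <= t * #|X :\ u|.
  apply: IH; first by have := cardsD1 u X; rewrite uX; lia.
  by move=> v; rewrite inE => /andP [_]; apply: hv.

have e : #|X| = (#|X :\ u|).+1 by rewrite (cardsD1 u X) uX.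
have e2 : t * #|X| = t * #|X :\ u| + t by rewrite e mulnS addnC.
lia.
Qed.



Definition parent_ok (B : nat -> {set V}) :=
  forall j v, v \in B j.+1 -> exists2 p, p \in B j & red p v.

Lemma anc_exists (B : nat -> {set V}) : parent_ok B ->
  forall j v, v \in B j -> exists f : nat -> V, [/\ f j = v,
     forall i, i <= j -> f i \in B i &
     forall i, i < j -> red (f i) (f i.+1)].
Proof.
move=> hpar; elim=> [|j IH] v vB.
  by exists (fun _ => v); split => // i; rewrite leqn0 => /eqP ->.
have [p pB r] := hpar j v vB.
have [f [fj fB fr]] := IH p pB.
exists (fun i => if i == j.+1 then v else f i); split.
- by rewrite eqxx.
- move=> i; case: (eqVneq i j.+1) => [->|ne] hi //; apply: fB.
  lia.
- move=> i hi; have -> : (i == j.+1) = false by apply/negbTE; rewrite neq_ltn hi.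
  case: (eqVneq i.+1 j.+1) => [[->]|ne]; first by rewrite fj.
  apply: fr; lia.
Qed.

Lemma layer_side (B : nat -> {set V}) x : B 0 = [set x] -> parent_ok B ->
  forall j v, v \in B j -> isL v = isL x (+) odd j.
Proof.
move=> h0 hpar; elim=> [|j IH] v vB.
  by move: vB; rewrite h0 inE => /eqP ->; rewrite addbF.
have [p pB r] := hpar j v vB.
have := red_side r; rewrite (IH p pB) /=.
by case: (isL v); case: (isL x); case: (odd j).
Qed.

Lemma cycle_of_branches n (B1 B2 : nat -> {set V}) x a cc u w :
  B1 0 = [set x] -> B2 0 = [set x] -> parent_ok B1 -> parent_ok B2 ->
  (forall i j v, i != j -> v \in B1 i -> v \in B1 j -> False) ->
  (forall i j v, i != j -> v \in B2 i -> v \in B2 j -> False) ->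
  (forall i j v, 0 < i -> 0 < j -> v \in B1 i -> v \in B2 j -> False) ->
  u \in B1 a -> w \in B2 cc -> red u w -> n = a + cc + 1 -> 0 < cc ->
  has_mono_cycle n c true.
Proof.
move=> h10 h20 hp1 hp2 d11 d22 d12 uB wB ruw en hcc.
have [f1 [f1a f1B f1r]] := anc_exists hp1 uB.
have [f2 [f2c f2B f2r]] := anc_exists hp2 wB.
have f10 : f1 0 = x by move: (f1B 0 (leq0n _)); rewrite h10 inE => /eqP.
have f20 : f2 0 = x by move: (f2B 0 (leq0n _)); rewrite h20 inE => /eqP.
pose G i := if i <= a then f1 i else f2 (n - i).
have G2 : forall i, a < i -> i < n -> G i \in B2 (n - i).
  move=> i h1 h2; rewrite /G leqNgt h1 /=; apply: f2B; lia.
have G1 : forall i, i <= a -> G i \in B1 i by move=> i h; rewrite /G h; apply: f1B.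
have Ginj : forall i j, i < n -> j < n -> G i = G j -> i = j.
  have key : forall i j, i <= a -> a < j -> j < n -> G i = G j -> False.
    move=> i j hi hj hjn e.
    have m2 := G2 j hj hjn.
    case: (posnP i) => [i0|ip].
      have : G i \in B2 0 by rewrite /G hi i0 f10 h20 inE.
      rewrite e => m0; apply: (d22 0 (n - j) (G j)) => //; rewrite eq_sym -lt0n; lia.
    apply: (d12 i (n - j) (G j)) => //; first lia.
    by rewrite -e; apply: G1.
  move=> i j hi hj e.
  case: (leqP i a) => hia; case: (leqP j a) => hja.
  - apply/eqP; apply/negPn/negP => ne.
    by apply: (d11 i j (G i) ne (G1 i hia)); rewrite e; apply: G1.
  - by case: (key i j).
  - by case: (key j i).
  - apply/eqP; apply/negPn/negP => ne.
    apply: (d22 (n - i) (n - j) (G i)); first by apply/eqP; lia.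
      exact: G2.
    by rewrite e; apply: G2.
have Gadj : forall i, i.+1 < n -> red (G i) (G i.+1).
  move=> i hi; case: (ltnP i a) => hia.
    by rewrite /G hia (ltnW hia); apply: f1r.
  case: (eqVneq i a) => [->|ne].
    rewrite /G leqnn ltnn f1a.
    have -> : n - a.+1 = cc by lia.
    by rewrite f2c.
  have hia' : a < i by rewrite ltn_neqAle eq_sym ne hia.
  have g1 : G i = f2 (n - i) by rewrite /G leqNgt hia'.
  have g2 : G i.+1 = f2 (n - i.+1) by rewrite /G leqNgt ltnS (ltnW hia').
  rewrite g1 g2 redC.
  have -> : n - i = (n - i.+1).+1 by lia.
  apply: f2r; lia.
have Gwrap : red (G n.-1) (G 0).
  have h : a < n.-1 by lia.
  have g1 : G n.-1 = f2 (n - n.-1) by rewrite /G leqNgt h.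
  have g0 : G 0 = x by rewrite /G leq0n f10.
  rewrite g1 g0.
  have -> : n - n.-1 = 1 by lia.
  by rewrite redC -f20; apply: f2r.
exists (fun i : 'I_n => G i); split.
  by move=> i j /Ginj e; apply/val_inj; apply: e.
move=> i; rewrite /= -/(red _ _).
have hi := ltn_ord i.
case: (ltnP i.+1 n) => hn.
  by rewrite modn_small //; apply: Gadj.
have e : i.+1 = n by apply/eqP; rewrite eqn_leq hi hn.
by rewrite e modnn; have -> : (i : nat) = n.-1 by lia.
Qed.


Lemma card_setD_ge (A W : {set V}) : #|A| <= #|A :\: W| + #|W|.
Proof.
have := cardsID W A; have := subset_leq_card (subsetIr A W); lia.
Qed.

Section Grow.
Variables (C' : {set V}) (x y : V) (d1 d2 M0 : nat).
Hypothesis hxC : x \notin C'.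
Hypothesis hyC : y \notin C'.
Hypothesis hexp : forall X : {set V}, X \subset C' -> 0 < #|X| -> #|X| < M0 ->
  8 * #|X| < #|NB X :&: C'|.
Hypothesis hx8 : 8 <= #|NB [set x] :&: C'|.
Hypothesis hy8 : 8 <= #|NB [set y] :&: C'|.
Hypothesis hd1 : forall k, k < d1 -> 2 ^ k < M0.
Hypothesis hd2 : forall k, k < d2 -> 2 ^ k < M0.

Record Inv (k : nat) (L1 L2 : nat -> {set V}) (U : {set V}) : Prop := MkInv {
  i10 : L1 0 = [set x]; i20 : L2 0 = [set y];
  ip1 : parent_ok L1; ip2 : parent_ok L2;
  isub : forall j, 0 < j -> [/\ L1 j \subset C', L2 j \subset C', L1 j \subset U & L2 j \subset U];
  iemp : forall j, k < j -> L1 j = set0 /\ L2 j = set0;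
  isz1 : forall j, j <= k -> j <= d1 -> #|L1 j| = 2 ^ j;
  isz2 : forall j, j <= k -> j <= d2 -> #|L2 j| = 2 ^ j;
  iU : #|U| <= 4 * 2 ^ k;
  id11 : forall i j v, i != j -> 0 < i -> 0 < j -> v \in L1 i -> v \in L1 j -> False;
  id22 : forall i j v, i != j -> 0 < i -> 0 < j -> v \in L2 i -> v \in L2 j -> False;
  id12 : forall i j v, 0 < i -> 0 < j -> v \in L1 i -> v \in L2 j -> False }.

Lemma expand8 (L : nat -> {set V}) r d k : L 0 = [set r] -> 8 <= #|NB [set r] :&: C'| ->
  (forall k, k < d -> 2 ^ k < M0) -> (0 < k -> L k \subset C') -> #|L k| = 2 ^ k -> k < d ->
  8 * 2 ^ k <= #|NB (L k) :&: C'|.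
Proof.
move=> h0 hr hd hsub hsz hk.
case: (posnP k) => [k0|kp]; first by rewrite k0 h0 expn0 muln1.
rewrite -hsz; apply: ltnW; apply: hexp; first exact: hsub.
  by rewrite hsz expn_gt0.
by rewrite hsz; apply: hd.
Qed.

Lemma pick_layer (S W : {set V}) k (b0 : bool) :
  (b0 -> 8 * 2 ^ k <= #|NB S :&: C'|) -> #|W| <= 6 * 2 ^ k ->
  exists A : {set V}, [/\ A \subset NB S :&: C', #|A| = (if b0 then 2 ^ k.+1 else 0) &
     forall v, v \in A -> v \notin W].
Proof.
case: b0 => h hW; last by exists set0; split; rewrite ?sub0set ?cards0 // => v; rewrite in_set0.
have h8 := h isT.
have := card_setD_ge (NB S :&: C') W.
move=> hh; have : 2 ^ k.+1 <= #|(NB S :&: C') :\: W| by rewrite expnS; lia.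
case/exists_subset_card => A [sA cA].
exists A; split => //.
- exact: subset_trans sA (subsetDl _ _).
- by move=> v /(subsetP sA); rewrite in_setD => /andP [].
Qed.

Lemma inv0 : Inv 0 (fun j => if j == 0 then [set x] else set0)
                   (fun j => if j == 0 then [set y] else set0) set0.
Proof.
split => //.
- by move=> j v /=; rewrite in_set0.
- by move=> j v /=; rewrite in_set0.
- by move=> [|j] //= _; rewrite !sub0set.
- by move=> [|j].
- by move=> [|j] //; rewrite cards1.
- by move=> [|j] //; rewrite cards1.
- by rewrite cards0.
- by move=> i [|j] v _ // _ _; rewrite in_set0.
- by move=> i [|j] v _ // _ _; rewrite in_set0.
- by move=> i [|j] v // _ _ _; rewrite in_set0.
Qed.

Lemma inv_step k L1 L2 U : Inv k L1 L2 U ->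
  exists L1' L2' U', Inv k.+1 L1' L2' U'.
Proof.
case=> h10 h20 hp1 hp2 hsub hemp hs1 hs2 hU d11 d22 d12.
have e1 : (k < d1) -> 8 * 2 ^ k <= #|NB (L1 k) :&: C'|.
  move=> hk; apply: (expand8 h10 hx8 hd1) => //.
  - by move=> kp; case: (hsub k kp).
  - by apply: hs1 => //; apply: ltnW.
have e2 : (k < d2) -> 8 * 2 ^ k <= #|NB (L2 k) :&: C'|.
  move=> hk; apply: (expand8 h20 hy8 hd2) => //.
  - by move=> kp; case: (hsub k kp).
  - by apply: hs2 => //; apply: ltnW.
have hU6 : #|U| <= 6 * 2 ^ k by lia.
have [A1 [sA1 cA1 nA1]] := @pick_layer (L1 k) U k (k < d1) e1 hU6.
have cA1' : #|A1| <= 2 ^ k.+1 by rewrite cA1; case: (k < d1).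
have hUA : #|U :|: A1| <= 6 * 2 ^ k.
  have := card_setU_le U A1; rewrite expnS in cA1'; lia.
have [A2 [sA2 cA2 nA2]] := @pick_layer (L2 k) (U :|: A1) k (k < d2) e2 hUA.
have cA2' : #|A2| <= 2 ^ k.+1 by rewrite cA2; case: (k < d2).
pose L1' j := if j == k.+1 then A1 else L1 j.
pose L2' j := if j == k.+1 then A2 else L2 j.
have sC1 : A1 \subset C' by apply: subset_trans sA1 (subsetIr _ _).
have sC2 : A2 \subset C' by apply: subset_trans sA2 (subsetIr _ _).
have nA2U : forall v, v \in A2 -> v \notin U.
  by move=> v /nA2; rewrite in_setU negb_or => /andP [].
have nA21 : forall v, v \in A2 -> v \notin A1.
  by move=> v /nA2; rewrite in_setU negb_or => /andP [].
have inU1 : forall j v, 0 < j -> v \in L1 j -> v \in U.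
  by move=> j v jp; case: (hsub j jp) => _ _ /subsetP h _; apply: h.
have inU2 : forall j v, 0 < j -> v \in L2 j -> v \in U.
  by move=> j v jp; case: (hsub j jp) => _ _ _ /subsetP h; apply: h.
have par_step : forall (L : nat -> {set V}) (A : {set V}), parent_ok L ->
    A \subset NB (L k) :&: C' -> L k.+2 = set0 ->
    parent_ok (fun j => if j == k.+1 then A else L j).
  move=> L A hp sA hL2 j v /=; case: (eqVneq j.+1 k.+1) => [[->]|ne].
    move=> vA; rewrite (_ : (k == k.+1) = false); last by rewrite eqn_leq ltnn andbF.
    have := subsetP sA v vA; rewrite in_setI => /andP [/NBP [p pL r] _].
    by exists p.
  move=> vL; have [p pL r] := hp j v vL.
  case: (eqVneq j k.+1) => [ej|nej]; last by exists p.
  by move: vL; rewrite ej hL2 in_set0.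
exists L1', L2', (U :|: A1 :|: A2); split.
- by rewrite /L1'.
- by rewrite /L2'.
- apply: par_step => //; by case: (hemp k.+2 (ltnW (ltnSn _))).
- apply: par_step => //; by case: (hemp k.+2 (ltnW (ltnSn _))).
- move=> j jp; rewrite /L1' /L2'; case: (eqVneq j k.+1) => [_|ne].
    split => //; apply/subsetP => v vA; rewrite !in_setU vA ?orbT //.
  case: (hsub j jp) => s1 s2 s3 s4; split => //.
    by apply: subset_trans s3 _; apply/subsetP => v; rewrite !in_setU => ->.
  by apply: subset_trans s4 _; apply/subsetP => v; rewrite !in_setU => ->.
- move=> j hj; rewrite /L1' /L2'.
  have -> : (j == k.+1) = false by apply/negbTE; rewrite neq_ltn hj orbT.
  by apply: hemp; apply: ltnW.
- move=> j hj hjd; rewrite /L1'; case: (eqVneq j k.+1) => [ej|ne].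
    by rewrite cA1 ej; rewrite ej in hjd; rewrite hjd.
  by apply: hs1 => //; lia.
- move=> j hj hjd; rewrite /L2'; case: (eqVneq j k.+1) => [ej|ne].
    by rewrite cA2 ej; rewrite ej in hjd; rewrite hjd.
  by apply: hs2 => //; lia.
- have := card_setU_le (U :|: A1) A2; have := card_setU_le U A1.
  rewrite expnS in cA1' cA2' *; lia.
- move=> i j v ne ip jp; rewrite /L1'.
  case: (eqVneq i k.+1) => [ei|nei]; case: (eqVneq j k.+1) => [ej|nej].
  + by rewrite ei ej eqxx in ne.
  + by move=> vA /(inU1 j v jp); move: (nA1 v vA) => /negP.
  + by move=> /(inU1 i v ip) vU vA; move: (nA1 v vA) => /negP.
  + exact: d11.
- move=> i j v ne ip jp; rewrite /L2'.
  case: (eqVneq i k.+1) => [ei|nei]; case: (eqVneq j k.+1) => [ej|nej].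
  + by rewrite ei ej eqxx in ne.
  + by move=> vA /(inU2 j v jp); move: (nA2U v vA) => /negP.
  + by move=> /(inU2 i v ip) vU vA; move: (nA2U v vA) => /negP.
  + exact: d22.
- move=> i j v ip jp; rewrite /L1' /L2'.
  case: (eqVneq i k.+1) => [ei|nei]; case: (eqVneq j k.+1) => [ej|nej].
  + by move=> vA1 vA2; move: (nA21 v vA2) => /negP.
  + by move=> vA /(inU2 j v jp); move: (nA1 v vA) => /negP.
  + by move=> /(inU1 i v ip) vU vA; move: (nA2U v vA) => /negP.
  + exact: d12.
Qed.

Lemma inv_all k : exists L1 L2 U, Inv k L1 L2 U.
Proof.
elim: k => [|k [L1 [L2 [U hi]]]]; first by do 3 eexists; apply: inv0.
exact: inv_step hi.
Qed.

End Grow.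

Section WithEP.
Variables m1 m2 M : nat.
Hypothesis hM1 : m1 <= M.
Hypothesis hM2 : m2 <= M.
Hypothesis EP : forall X Y, opp X Y -> m1 <= #|X| -> m2 <= #|Y| ->
  exists x y, [/\ x \in X, y \in Y & red x y].

Lemma noedge_small (X Y : {set V}) : opp X Y -> (forall x y, x \in X -> y \in Y -> ~~ red x y) ->
  #|X| < M \/ #|Y| < M.
Proof.
move=> hop hno; case: (ltnP #|X| M) => h1; first by left.
case: (ltnP #|Y| M) => h2; first by right.
have [x [y [xX yY r]]] := EP hop (leq_trans hM1 h1) (leq_trans hM2 h2).
by move: (hno x y xX yY); rewrite r.
Qed.

Lemma nbL (X : {set V}) : X \subset Lset -> M <= #|X| -> #|Rset :\: NB X| < M.
Proof.
move=> sX hX.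
have hop : opp X (Rset :\: NB X) by left; split => //; apply: subsetDl.
have hno : forall x y, x \in X -> y \in Rset :\: NB X -> ~~ red x y.
  move=> x y xX; rewrite inE => /andP [yN _]; apply/negP => r; move/negP: yN; apply.
  by apply/NBP; exists x.
case: (noedge_small hop hno); lia.
Qed.

Lemma nbR (X : {set V}) : X \subset Rset -> M <= #|X| -> #|Lset :\: NB X| < M.
Proof.
move=> sX hX.
have hop : opp X (Lset :\: NB X) by right; split => //; apply: subsetDl.
have hno : forall x y, x \in X -> y \in Lset :\: NB X -> ~~ red x y.
  move=> x y xX; rewrite inE => /andP [yN _]; apply/negP => r; move/negP: yN; apply.
  by apply/NBP; exists x.
case: (noedge_small hop hno); lia.
Qed.

Lemma subDL (Z : {set V}) : Z :\: Lset \subset Rset.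
Proof. by apply/subsetP => v; rewrite !inE => /andP [h _]. Qed.

Lemma big_nb (Z C : {set V}) w : #|Lset :\: C| <= w -> #|Rset :\: C| <= w ->
  2 * M - 1 <= #|Z| -> 0 < M -> b + M <= #|NB Z :&: C| + w + M + M.
Proof.
move=> hL hR hZ hM0.
have := cardsID Lset Z.
case: (leqP M #|Z :&: Lset|) => h1.
- have h := nbL (subsetIr Z Lset) h1.
  have sub : Rset :&: C \subset (Rset :\: NB (Z :&: Lset)) :|: (NB Z :&: C).
    apply/subsetP => v; rewrite in_setI => /andP [vR vC].
    case: (boolP (v \in NB (Z :&: Lset))) => hv; first by
      rewrite in_setU in_setI vC (subsetP (NBS (subsetIl Z Lset)) v hv) orbT.
    by rewrite in_setU in_setD hv vR.
  have := subset_leq_card sub; have := card_setU_le (Rset :\: NB (Z :&: Lset)) (NB Z :&: C).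
  have := cardsID C Rset; rewrite card_Rset.
  lia.
- move=> e; have h2 : M <= #|Z :\: Lset| by lia.
  have h := nbR (subDL Z) h2.
  have sub : Lset :&: C \subset (Lset :\: NB (Z :\: Lset)) :|: (NB Z :&: C).
    apply/subsetP => v; rewrite in_setI => /andP [vR vC].
    case: (boolP (v \in NB (Z :\: Lset))) => hv; first by
      rewrite in_setU in_setI vC (subsetP (NBS (subsetDl Z Lset)) v hv) orbT.
    by rewrite in_setU in_setD hv vR.
  have := subset_leq_card sub; have := card_setU_le (Lset :\: NB (Z :\: Lset)) (NB Z :&: C).
  have := cardsID C Lset; rewrite card_Lset.
  lia.
Qed.


Lemma cleaning (C : {set V}) w : #|Lset :\: C| <= w -> #|Rset :\: C| <= w -> 0 < M ->
  24 * M + w + M <= b ->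
  exists C' : {set V}, [/\ C' \subset C, #|C :\: C'| <= 9 * (2 * M - 2) &
   forall X : {set V}, X \subset C' -> 0 < #|X| -> #|X| < M -> 8 * #|X| < #|NB X :&: C'|].
Proof.
move=> hL hR hM0 hb.
pose bad (Z : {set V}) := [&& Z \subset C, #|NB Z :&: C| <= 8 * #|Z| & #|Z| <= 3 * M - 3].
have bad0 : bad set0 by rewrite /bad sub0set NB0 set0I !cards0.
have [Z bZ maxZ] : exists2 Z : {set V}, bad Z & forall Y : {set V}, bad Y -> #|Y| <= #|Z|.
  by case: (@arg_maxnP _ set0 bad (fun Z => #|Z|) bad0) => Z bZ maxZ; exists Z.
case/and3P: bZ => sZC hNZ hZ3.
have hZ2 : #|Z| <= 2 * M - 2.
  case: (leqP #|Z| (2 * M - 2)) => // h.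
  have := big_nb hL hR (_ : 2 * M - 1 <= #|Z|) hM0; lia.
exists (C :\: (Z :|: NB Z)); split.
- exact: subsetDl.
- have sub : C :\: (C :\: (Z :|: NB Z)) \subset Z :|: (NB Z :&: C).
    apply/subsetP => v; rewrite !in_setD !in_setU in_setI.
    by case: (v \in Z) => //=; case: (v \in C) => //=; case: (v \in NB Z).
  have := subset_leq_card sub; have := card_setU_le Z (NB Z :&: C); lia.
- move=> X sX hX0 hXM.
  have dZX : Z :&: X = set0.
    apply/setP => v; rewrite in_setI in_set0; apply/negP => /andP [vZ vX].
    by move: (subsetP sX v vX); rewrite in_setD in_setU vZ.
  have cZX : #|Z :|: X| = #|Z| + #|X| by rewrite cardsU dZX cards0 subn0.
  have nbad : ~~ bad (Z :|: X).
    apply/negP => bZX; have := maxZ _ bZX; rewrite cZX; lia.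
  have hbig : 8 * (#|Z| + #|X|) < #|NB (Z :|: X) :&: C|.
    move: nbad; rewrite /bad subUset sZC (subset_trans sX (subsetDl _ _)) /= cZX.
    case: (leqP #|NB (Z :|: X) :&: C| (8 * (#|Z| + #|X|))) => //= _.
    rewrite -ltnNge => hh; set z := #|Z| in hh hZ2 *; set xx := #|X| in hh hXM *. clearbody z xx; lia.
  have sub : NB (Z :|: X) :&: C \subset (NB Z :&: C) :|: (NB X :&: (C :\: (Z :|: NB Z))).
    apply/subsetP => v; rewrite NBU in_setI in_setU => /andP [/orP [vN|vN] vC].
      by rewrite in_setU in_setI vN vC.
    case: (boolP (v \in NB Z)) => hvz; first by rewrite in_setU in_setI hvz vC.
    rewrite in_setU in_setI in_setI vN in_setD in_setU (negbTE hvz) vC orbF /= andbT.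
    apply/negP => vZ; case/NBP: vN => x xX r.
    have : x \in NB Z by apply/NBP; exists v => //; rewrite redC.
    by move: (subsetP sX x xX); rewrite in_setD in_setU => /andP [/norP [_ /negbTE ->]].
  have := subset_leq_card sub; have := card_setU_le (NB Z :&: C) (NB X :&: (C :\: (Z :|: NB Z))).
  lia.
Qed.


Definition dfs_inv (D S T : {set V}) (U : seq V) :=
  [/\ forall v, (v \in D) = [|| v \in S, v \in T | v \in U],
      forall v, v \in S -> v \in T -> False,
      forall v, v \in U -> (v \notin S) && (v \notin T),
      uniq U &
      ((if U is u :: U' then path red u U' else true) /\
          forall s t, s \in S -> t \in T -> ~~ red s t)].

Lemma one_move (D S T : {set V}) (U : seq V) : dfs_inv D S T U -> #|S| < #|D| ->
  (exists S' T' U', dfs_inv D S' T' U' /\ #|S'| = #|S|.+1) \/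
  (exists T' U', dfs_inv D S T' U' /\ #|T'| < #|T|).
Proof.
case=> hD hST hU hu [hp hno] hS.
case: U hD hU hu hp => [|u U'] hD hU hu hp.
- case: (set_0Vmem T) => [T0|[t tT]].
    exfalso; have : D \subset S.
      by apply/subsetP => v; rewrite hD T0 in_set0 /= orbF.
    by move/subset_leq_card; lia.
  right; exists (T :\ t), [:: t]; split; last by rewrite (cardsD1 t T) tT.
  split => //.
  + move=> v; rewrite hD in_setD1 mem_seq1; case: (eqVneq v t) => [->|] /=.
      by rewrite tT !orbT.
    by rewrite orbF.
  + by move=> v vS; rewrite in_setD1 => /andP [_ vT]; apply: (hST v).
  + move=> v; rewrite mem_seq1 => /eqP ->; rewrite in_setD1 eqxx /= andbT.
    by apply/negP => tS; apply: (hST t).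
  + split => // s x sS; rewrite in_setD1 => /andP [_ xT]; exact: hno.
- case: (boolP [exists t in T, red u t]) => [/existsP [t /andP [tT rut]]|hn].
  + right; exists (T :\ t), [:: t, u & U']; split; last by rewrite (cardsD1 t T) tT.
    have tU : t \notin u :: U'.
      by apply/negP => /hU /andP [_]; rewrite tT.
    split => //.
    * move=> v; rewrite hD in_setD1 !inE; case: (eqVneq v t) => [->|] /=.
        by rewrite tT !orbT.
      by [].
    * by move=> v vS; rewrite in_setD1 => /andP [_ vT]; apply: (hST v).
    * move=> v; rewrite inE => /orP [/eqP ->|vU].
        rewrite in_setD1 eqxx /= andbT.
        by apply/negP => tS; apply: (hST t).
      by move: (hU v vU); rewrite in_setD1 => /andP [-> /negbTE ->]; rewrite andbF.
    * by rewrite cons_uniq tU hu.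
    * split; first by rewrite /= redC rut.
      move=> s x sS; rewrite in_setD1 => /andP [_ xT]; exact: hno.
  + left; exists (u |: S), T, U'.
    have uS : u \notin S by case/andP: (hU u (mem_head u U')).
    have uT : u \notin T by case/andP: (hU u (mem_head u U')).
    split; last by rewrite cardsU1 uS.
    case/andP: hu => uU' hu'.
    split => //.
    * move=> v; rewrite hD in_setU1 inE.
      by case: (v == u); rewrite /= ?orbT.
    * move=> v; rewrite in_setU1 => /orP [/eqP ->|vS] vT; first by rewrite vT in uT.
      exact: (hST v).
    * move=> v vU; rewrite in_setU1.
      have := hU v (@mem_behead _ (u :: U') v vU).
      case/andP => /negbTE vS ->; rewrite vS orbF andbT.
      by apply/negP => /eqP e; rewrite -e vU in uU'.
    * split.
        by case: U' hp uU' hu' hU hD {hn} => // u2 U3 /= /andP [].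
      move=> s x; rewrite in_setU1 => /orP [/eqP ->|sS] xT; last exact: hno.
      apply/negP => r; move/negP: hn; apply; apply/existsP; exists x.
      by rewrite xT.
Qed.

Lemma reach_next (D : {set V}) k : forall (S T : {set V}) (U : seq V), #|T| <= k -> dfs_inv D S T U -> #|S| < #|D| ->
  exists S' T' U', dfs_inv D S' T' U' /\ #|S'| = #|S|.+1.
Proof.
elim: k => [|k IH] S T U hT hi hS; case: (one_move hi hS) => // [[T' [U' [hi' hT']]]].
  lia.
by apply: (IH S T' U') => //; lia.
Qed.

Lemma reach (D : {set V}) s : s <= #|D| -> exists S T U, dfs_inv D S T U /\ #|S| = s.
Proof.
elim: s => [|s IH] hs.
  exists set0, D, [::]; split; last by rewrite cards0.
  split => //.
  - by move=> v; rewrite in_set0 /= orbF.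
  - by move=> v; rewrite in_set0.
  - by split => // s t; rewrite in_set0.
have [S [T [U [hi e]]]] := IH (ltnW hs).
have hlt : #|S| < #|D| by rewrite e.
have [S' [T' [U' [hi' e']]]] := reach_next (leqnn #|T|) hi hlt.
by exists S', T', U'; rewrite e' e.
Qed.

Lemma split_card (D S T : {set V}) (U : seq V) (A : {set V}) :
  (forall v, (v \in D) = [|| v \in S, v \in T | v \in U]) ->
  #|D :&: A| <= #|S :&: A| + #|T :&: A| + size U.
Proof.
move=> hD.
have sub : D :&: A \subset (S :&: A) :|: (T :&: A) :|: [set x in U].
  apply/subsetP => v; rewrite in_setI hD !in_setU !in_setI inE.
  by case: (v \in S); case: (v \in T); case: (v \in A); case: (v \in U).
apply: (leq_trans (subset_leq_card sub)); apply: (leq_trans (card_setU_le _ _)).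
apply: leq_add; first exact: card_setU_le.
by rewrite cardsE card_size.
Qed.

Lemma long_path (D : {set V}) l g : g <= #|D :&: Lset| -> g <= #|D :&: Rset| ->
  0 < l -> 2 * M + l <= g + 2 -> 0 < M ->
  exists p : seq V, [/\ uniq p, {subset p <= D}, l <= size p &
     if p is u :: p' then path red u p' else true].
Proof.
move=> hgL hgR hl hg hM0.
have hDs : 2 * M - 1 <= #|D|.
  have := subset_leq_card (subsetIl D Lset); lia.
have [S [T [U [hi e]]]] := reach hDs.
case: hi => hD hST hU hu [hp hno].
case: (leqP l (size U)) => hlU.
  exists U; split => //.
  move=> v vU; rewrite hD vU; by rewrite !orbT.
exfalso.
have cL := split_card Lset hD.
have cR := split_card Rset hD.
have eS := cardsID Lset S.
have eT := cardsID Lset T.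
have sR : forall X : {set V}, X :&: Rset = X :\: Lset.
  by move=> X; rewrite setDE.
rewrite !sR in cR hgR.
have F1 : #|S :&: Lset| < M \/ #|T :\: Lset| < M.
  apply: noedge_small; first by left; split; [apply: subsetIr | apply: subDL].
  move=> x y; rewrite in_setI in_setD => /andP [xS _] /andP [_ yT]; exact: hno.
have F2 : #|S :\: Lset| < M \/ #|T :&: Lset| < M.
  apply: noedge_small; first by right; split; [apply: subDL | apply: subsetIr].
  move=> x y; rewrite in_setD in_setI => /andP [_ xS] /andP [yT _]; exact: hno.
lia.
Qed.


Lemma uplog_lt m k : 0 < m -> k < up_log 2 m -> 2 ^ k < m.
Proof.
move=> hm hk; rewrite ltnNge; apply/negP => h.
have := up_log_min (isT : 1 < 2) h; lia.
Qed.

Lemma main_cycle n : 0 < m1 -> 0 < m2 -> ~~ odd n ->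
  up_log 2 m1 + up_log 2 m2 + 1 <= n -> n <= m2 -> 32 * M <= b ->
  has_mono_cycle n c true.
Proof.
move=> hm1 hm2 hev hn hnm hb.
set d1 := up_log 2 m1; set d2 := up_log 2 m2.
have hM0 : 0 < M by lia.
have hn2 : 2 <= n.
  by case: n hev hn {hnm} => [|[|n']] //=; lia.
have hd2 : 0 < d2 by rewrite /d2 up_log_gt0 /=; lia.
set q := n - 1 - d1 - d2.
set w := 4 * M.
have [WL [sWL cWL]] : exists WL : {set V}, WL \subset Lset /\ #|WL| = w.
  by apply: exists_subset_card; rewrite card_Lset; lia.
have [WR [sWR cWR]] : exists WR : {set V}, WR \subset Rset /\ #|WR| = w.
  by apply: exists_subset_card; rewrite card_Rset; lia.
pose W := WL :|: WR.
pose C := ~: W.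
have hLC : #|Lset :\: C| <= w.
  rewrite -cWL; apply: subset_leq_card; apply/subsetP => v.
  rewrite in_setD in_setC negbK in_setU => /andP [/orP [//|vR] vL].
  by move: (subsetP sWR v vR); rewrite inR -inL vL.
have hRC : #|Rset :\: C| <= w.
  rewrite -cWR; apply: subset_leq_card; apply/subsetP => v.
  rewrite in_setD in_setC negbK in_setU => /andP [/orP [vL|//] vR].
  by move: (subsetP sWL v vL) vR; rewrite inR inL => ->.
have hbw : 24 * M + w + M <= b by rewrite /w; lia.
have [C' [sC' cC' hexp]] := cleaning hLC hRC hM0 hbw.
have WC' : forall v, v \in C' -> v \in W -> False.
  by move=> v /(subsetP sC'); rewrite in_setC => /negP.
pose D := [set v in W | 8 <= #|NB [set v] :&: C'|].
have sDW : forall v, v \in D -> v \in W by move=> v; rewrite inE => /andP [].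
have hRb : #|Rset| = b := card_Rset.
have hLb : #|Lset| = b := card_Lset.
have gL : 3 * M + 1 <= #|D :&: Lset|.
  have hB : #|WL :\: D| < M.
    rewrite ltnNge; apply/negP => hB.
    have [X [sX cX]] := exists_subset_card hB.
    have sXL : X \subset Lset by apply: subset_trans sX (subset_trans (subsetDl _ _) sWL).
    have h1 := nbL sXL (eq_leq (esym cX)).
    have h2 : #|NB X :&: C'| <= 7 * #|X|.
      apply: card_NB_le => v /(subsetP sX); rewrite in_setD => /andP [vD vWL].
      have vW : v \in W by rewrite in_setU vWL.
      rewrite leqNgt; apply/negP => h; move/negP: vD; apply; rewrite inE vW /=; exact: h.
    have sub : Rset \subset (Rset :\: NB X) :|: (Rset :\: C) :|: (C :\: C') :|: (NB X :&: C').
      apply/subsetP => v vR; rewrite !in_setU !in_setD !in_setI vR /=.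
      by case: (v \in NB X); case: (v \in C); case: (v \in C').
    have := subset_leq_card sub.
    have := card_setU_le (Rset :\: NB X :|: Rset :\: C :|: C :\: C') (NB X :&: C').
    have := card_setU_le (Rset :\: NB X :|: Rset :\: C) (C :\: C').
    have := card_setU_le (Rset :\: NB X) (Rset :\: C).
    rewrite /w in hRC; lia.
  have sub : WL \subset (D :&: Lset) :|: (WL :\: D).
    apply/subsetP => v vW; rewrite in_setU in_setI in_setD vW (subsetP sWL v vW).
    by case: (v \in D).
  have := subset_leq_card sub; have := card_setU_le (D :&: Lset) (WL :\: D).
  rewrite /w in cWL; lia.
have gR : 3 * M + 1 <= #|D :&: Rset|.
  have hB : #|WR :\: D| < M.
    rewrite ltnNge; apply/negP => hB.
    have [X [sX cX]] := exists_subset_card hB.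
    have sXR : X \subset Rset by apply: subset_trans sX (subset_trans (subsetDl _ _) sWR).
    have h1 := nbR sXR (eq_leq (esym cX)).
    have h2 : #|NB X :&: C'| <= 7 * #|X|.
      apply: card_NB_le => v /(subsetP sX); rewrite in_setD => /andP [vD vWR].
      have vW : v \in W by rewrite in_setU vWR orbT.
      rewrite leqNgt; apply/negP => h; move/negP: vD; apply; rewrite inE vW /=; exact: h.
    have sub : Lset \subset (Lset :\: NB X) :|: (Lset :\: C) :|: (C :\: C') :|: (NB X :&: C').
      apply/subsetP => v vL; rewrite !in_setU !in_setD !in_setI vL /=.
      by case: (v \in NB X); case: (v \in C); case: (v \in C').
    have := subset_leq_card sub.
    have := card_setU_le (Lset :\: NB X :|: Lset :\: C :|: C :\: C') (NB X :&: C').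
    have := card_setU_le (Lset :\: NB X :|: Lset :\: C) (C :\: C').
    have := card_setU_le (Lset :\: NB X) (Lset :\: C).
    rewrite /w in hLC; lia.
  have sub : WR \subset (D :&: Rset) :|: (WR :\: D).
    apply/subsetP => v vW; rewrite in_setU in_setI in_setD vW (subsetP sWR v vW).
    by case: (v \in D).
  have := subset_leq_card sub; have := card_setU_le (D :&: Rset) (WR :\: D).
  rewrite /w in cWR; lia.
have hqn : q < n by rewrite /q; lia.
have hq2 : 2 * M + q.+1 <= 3 * M + 1 + 2 by lia.
have [p [up sp lp pp]] := long_path gL gR (ltn0Sn _) hq2 hM0.
case: p up sp lp pp => [//|x p'] up sp lp pp.
pose P j := nth x (x :: p') j.
have hPD : forall j, j <= q -> P j \in D.
  by move=> j hj; apply: sp; apply: mem_nth; apply: leq_ltn_trans hj lp.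
have hPr : forall j, j < q -> red (P j) (P j.+1).
  move=> j hj; move/(pathP x): pp => h; apply: h; rewrite /= in lp; lia.
have hPinj : forall i j, i <= q -> j <= q -> P i = P j -> i = j.
  move=> i j hi hj e; apply/eqP; rewrite -(nth_uniq x _ _ up); first by rewrite /P in e; rewrite e.
    rewrite /= in lp *; lia.
  rewrite /= in lp *; lia.
set y := P q.
have nC' : forall v, v \in D -> v \notin C'.
  by move=> v vD; apply/negP => vC; apply: (WC' v vC); apply: sDW.
have g8 : forall v, v \in D -> 8 <= #|NB [set v] :&: C'|.
  by move=> v; rewrite inE => /andP [].
have hx : P 0 = x by [].
have hd1' : forall k, k < d1 -> 2 ^ k < M.
  by move=> k hk; have := uplog_lt hm1 hk; lia.
have hd2' : forall k, k < d2 -> 2 ^ k < M.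
  by move=> k hk; have := uplog_lt hm2 hk; lia.
have xD : x \in D by rewrite -hx; apply: hPD.
have yD : y \in D by apply: hPD.
have [L1 [L2 [U hI]]] := inv_all (nC' x xD) (nC' y yD) hexp (g8 x xD) (g8 y yD) hd1' hd2' (d1 + d2).
case: hI => h10 h20 hp1 hp2 hsub hemp hs1 hs2 hU d11 d22 d12.
have inC1 : forall j v, 0 < j -> v \in L1 j -> v \in C'.
  by move=> j v jp; case: (hsub j jp) => /subsetP h _ _ _; apply: h.
have inC2 : forall j v, 0 < j -> v \in L2 j -> v \in C'.
  by move=> j v jp; case: (hsub j jp) => _ /subsetP h _ _; apply: h.
pose B2 j := if j <= q then [set P j] else L2 (j - q).
have B20 : B2 0 = [set x] by rewrite /B2 leq0n.
have hqd : q < q + d2 by rewrite -{1}(addn0 q) ltn_add2l.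
have B2end : B2 (q + d2) = L2 d2 by rewrite /B2 leqNgt hqd /= addKn.
have hpB2 : parent_ok B2.
  move=> j v; rewrite /B2; case: (leqP j.+1 q) => h.
    rewrite (ltnW h) inE => /eqP ->; exists (P j); first by rewrite inE.
    exact: hPr.
  rewrite subSn; last by rewrite -ltnS.
  move=> vL; have [r rL rr] := hp2 _ _ vL; exists r => //.
  case: (leqP j q) => hjq //.
  have ejq : j = q by apply/eqP; rewrite eqn_leq hjq -ltnS h.
  by move: rL; rewrite ejq subnn h20.
have D22 : forall i j v, i != j -> v \in B2 i -> v \in B2 j -> False.
  have key : forall i j v, i <= q -> q < j -> v \in B2 i -> v \in B2 j -> False.
    move=> i j v hi hj; rewrite /B2 hi leqNgt hj /= inE => /eqP -> /inC2 h.
    have hjq : 0 < j - q by rewrite subn_gt0.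
    by move: (nC' _ (hPD i hi)); rewrite (h hjq).
  move=> i j v ne; case: (leqP i q) => hi; case: (leqP j q) => hj.
  - rewrite /B2 hi hj !inE => /eqP -> /eqP /hPinj e.
    by move: ne; rewrite e // eqxx.
  - exact: key.
  - by move=> h1 h2; apply: (key j i v).
  - rewrite /B2 leqNgt hi leqNgt hj /=.
    apply: d22; [|by rewrite subn_gt0|by rewrite subn_gt0].
    apply/eqP => e; move/eqP: ne; apply.
    by rewrite -(subnK (ltnW hi)) -(subnK (ltnW hj)) e.
have D11 : forall i j v, i != j -> v \in L1 i -> v \in L1 j -> False.
  move=> i j v ne; case: (posnP i) => [i0|ip]; case: (posnP j) => [j0|jp].
  - by move: ne; rewrite i0 j0.
  - rewrite i0 h10 inE => /eqP -> /(inC1 j x jp); by rewrite (negbTE (nC' x xD)).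
  - move=> vL; rewrite j0 h10 inE => /eqP e; move: (inC1 i v ip vL).
    by rewrite e (negbTE (nC' x xD)).
  - exact: d11.
have D12 : forall i j v, 0 < i -> 0 < j -> v \in L1 i -> v \in B2 j -> False.
  move=> i j v ip jp vL; rewrite /B2; case: (leqP j q) => hj.
    rewrite inE => /eqP e; move: (inC1 i v ip vL); rewrite e.
    by rewrite (negbTE (nC' _ (hPD j hj))).
  by apply: d12 vL; rewrite // subn_gt0.
have en : n = d1 + (q + d2) + 1 by rewrite /q; lia.
have hodd : odd d1 != odd (q + d2).
  have h1 : odd n = ~~ odd (d1 + (q + d2)) by rewrite {1}en addn1.
  move: hev; rewrite h1 negbK oddD.
  by case: (odd d1); case: (odd (q + d2)).
have sd1 := layer_side h10 hp1 (j := d1).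
have sd2 := layer_side B20 hpB2 (j := q + d2).
rewrite B2end in sd2.
have hopp : opp (L1 d1) (L2 d2).
  case e: (isL x (+) odd d1).
  - left; split; apply/subsetP => v vL.
      by rewrite inL (sd1 v vL) e.
    rewrite inR (sd2 v vL); move: e hodd.
    by case: (isL x); case: (odd d1); case: (odd (q + d2)).
  - right; split; apply/subsetP => v vL.
      by rewrite inR (sd1 v vL) e.
    rewrite inL (sd2 v vL); move: e hodd.
    by case: (isL x); case: (odd d1); case: (odd (q + d2)).
have c1 : m1 <= #|L1 d1|.
  rewrite hs1 //; last by rewrite leq_addr.
  exact: up_logP.
have c2 : m2 <= #|L2 d2|.
  rewrite hs2 //; last by rewrite leq_addl.
  exact: up_logP.
have [u [w' [uL wL ruw]]] := EP hopp c1 c2.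
apply: (cycle_of_branches h10 B20 hp1 hpB2 D11 D22 D12 uL _ ruw en).
- by rewrite B2end.
- by rewrite addn_gt0 hd2 orbT.
Qed.




End WithEP.
End Main.

Theorem lemma2p4 (m1 m2 n : nat) :
  0 < m1 -> 0 < m2 -> ~~ odd n ->
  up_log 2 m1 + up_log 2 m2 + 1 <= n -> n <= m2 ->
  BR_le n m1 m2 (32 * m1 + 49 * m2).
Proof.
move=> h1 h2 hev hn hnm.
exists (32 * m1 + 49 * m2); split => // c.
case: (classic (has_mono_Kab m1 m2 c false)) => hK; [by right | left].
have hM1 : m1 <= maxn m1 m2 by apply: leq_maxl.
have hM2 : m2 <= maxn m1 m2 by apply: leq_maxr.
apply: (@main_cycle _ c m1 m2 (maxn m1 m2) hM1 hM2 (EP_of hK)) => //.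
lia.
Qed.
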